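(* Let $\mu,\sigma,r,c_s>0$ and $\theta\in\mathbb{R}$ be constants. Define \[F(x)=\int_0^\infty u^{\frac{r}{\mu}-1}e^{\sqrt{\frac{2\mu}{\sigma^2}}(x-\theta)u-\frac{u^2}{2}}\,du,\qquad G(x)=\int_0^\infty u^{\frac{r}{\mu}-1}e^{\sqrt{\frac{2\mu}{\sigma^2}}(\theta-x)u-\frac{u^2}{2}}\,du,\] $\psi(x)=F(x)/G(x)$ (a strictly increasing bijection from $\mathbb{R}$ onto $(0,\infty)$), $h_s(x)=e^x-c_s$, and \[H(z)=\begin{cases}\dfrac{h_s}{G}\circ\psi^{-1}(z), & z>0,\\[1mm] \lim_{x\to-\infty}\dfrac{(h_s(x))^+}{G(x)}, & z=0.\end{cases}\] Let $x_s$ be the unique root of $f_s(x)=(\mu\theta+\frac12\sigma^2-r)-\mu x+rc_se^{-x}$. Then $H$ is continuous on $[0,+\infty)$, twice differentiable on $(0,+\infty)$, and: (i) $H(0)=0$, $H(z)<0$ for $z\in(0,\psi(\ln c_s))$ and $H(z)>0$ for $z\in(\psi(\ln c_s),+\infty)$; (ii) $H$ is strictly increasing on $(\psi(\ln c_s),+\infty)$, and $H'(z)\to0$ as $z\to+\infty$; (iii) $H$ is convex on $(0,\psi(x_s)]$ and concave on $[\psi(x_s),+\infty)$.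
   Context: $F$ and $G$ are the positive increasing and decreasing solutions of $\frac{\sigma^2}{2}u''+\mu(\theta-x)u'=ru$ (the generator of the OU process $dX_t=\mu(\theta-X_t)dt+\sigma dB_t$). *)

(* Defs.v *)
From Stdlib Require Import Reals ClassicalEpsilon.
From Coquelicot Require Import Coquelicot.
Open Scope R_scope.

Definition kappa (mu sigma : R) : R := sqrt (2 * mu / sigma ^ 2).

(* F(x) = int_0^oo u^(r/mu - 1) exp(kappa (x - theta) u - u^2/2) du
   (improper at both ends: at 0+ the power may be singular, at +oo). *)
Definition F_ou (mu sigma r theta x : R) : R :=
  RInt_gen (fun u => Rpower u (r / mu - 1) *
                     exp (kappa mu sigma * (x - theta) * u - u ^ 2 / 2))
           (at_right 0) (Rbar_locally p_infty).

Definition G_ou (mu sigma r theta x : R) : R :=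
  RInt_gen (fun u => Rpower u (r / mu - 1) *
                     exp (kappa mu sigma * (theta - x) * u - u ^ 2 / 2))
           (at_right 0) (Rbar_locally p_infty).

Definition psi_ou (mu sigma r theta x : R) : R :=
  F_ou mu sigma r theta x / G_ou mu sigma r theta x.

Definition psi_inv (mu sigma r theta z : R) : R :=
  epsilon (inhabits 0) (fun x => psi_ou mu sigma r theta x = z).

Definition h_s (cs x : R) : R := exp x - cs.

(* H(z) = (h_s/G)(psi^{-1} z) for z > 0, and
   H(0) = lim_{x -> -oo} (h_s x)^+ / G x  (the value given for z <= 0;
   only z >= 0 is relevant). *)
Definition H_ou (mu sigma r theta cs z : R) : R :=
  if Rlt_dec 0 z then
    h_s cs (psi_inv mu sigma r theta z) /
      G_ou mu sigma r theta (psi_inv mu sigma r theta z)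
  else
    real (Lim (fun x => Rmax (h_s cs x) 0 / G_ou mu sigma r theta x) m_infty).

Definition f_s (mu sigma r theta cs x : R) : R :=
  (mu * theta + sigma ^ 2 / 2 - r) - mu * x + r * cs * exp (- x).

Definition convex_on (D : R -> Prop) (f : R -> R) : Prop :=
  forall a b t, D a -> D b -> 0 <= t <= 1 ->
    f (t * a + (1 - t) * b) <= t * f a + (1 - t) * f b.

Definition concave_on (D : R -> Prop) (f : R -> R) : Prop :=
  forall a b t, D a -> D b -> 0 <= t <= 1 ->
    t * f a + (1 - t) * f b <= f (t * a + (1 - t) * b).

(* Main.v *)
Require Import Defs.
From Stdlib Require Import Reals Lra Ranalysis5 ClassicalEpsilon FunctionalExtensionality.
From Coquelicot Require Import Coquelicot.
Open Scope R_scope.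

Lemma ballR (x e y : R) : ball x e y <-> Rabs (y - x) < e.
Proof. split; intro H; exact H. Qed.

Lemma IRG_intro (f : R -> R) (l : R) :
  (forall a b, 0 < a -> a <= b -> ex_RInt f a b) ->
  (forall eps, 0 < eps -> exists d, 0 < d /\ exists M, forall a b,
      0 < a < d -> M < b -> a <= b -> Rabs (RInt f a b - l) < eps) ->
  is_RInt_gen f (at_right 0) (Rbar_locally p_infty) l.
Proof.
  intros Hex Hlim P [eps HP].
  destruct (Hlim eps (cond_pos eps)) as [d [Hd [M HM]]].
  assert (Hm : 0 < Rmin d 1) by (apply Rmin_pos; lra).
  apply Filter_prod with (fun a => 0 < a < Rmin d 1) (fun b => Rmax M 1 < b).
  - exists (mkposreal _ Hm). intros y Hy Hy0. assert (Hy1 : Rabs (y - 0) < Rmin d 1) by exact Hy. rewrite Rminus_0_r in Hy1.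
    split; auto. apply Rabs_def2 in Hy1. lra.
  - exists (Rmax M 1). auto.
  - intros a b Ha Hb. simpl. exists (RInt f a b). split.
    + apply (RInt_correct f a b). apply Hex. lra.
      assert (Rmin d 1 <= 1) by apply Rmin_r. assert (1 <= Rmax M 1) by apply Rmax_r. lra.
    + apply HP. apply ballR. apply HM.
      * assert (Rmin d 1 <= d) by apply Rmin_l. lra.
      * assert (M <= Rmax M 1) by apply Rmax_l. lra.
      * assert (Rmin d 1 <= 1) by apply Rmin_r. assert (1 <= Rmax M 1) by apply Rmax_r. lra.
Qed.

Lemma IRG_elim (f : R -> R) (l : R) :
  is_RInt_gen f (at_right 0) (Rbar_locally p_infty) l ->
  forall eps, 0 < eps -> exists d, 0 < d /\ exists M, forall a b,
      0 < a < d -> M < b -> forall y, is_RInt f a b y -> Rabs (y - l) < eps.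
Proof.
  intros H eps Heps.
  specialize (H (ball l (mkposreal eps Heps)) (locally_ball l _)).
  destruct H as [Q R' HQ HR HQR].
  destruct HQ as [d Hd]. destruct HR as [M HM].
  exists d. split. apply cond_pos. exists M.
  intros a b Ha Hb y Hy.
  destruct (HQR a b) as [y' [Hy' Hb']].
  - apply Hd. apply ballR. rewrite Rminus_0_r, Rabs_pos_eq; lra. lra.
  - apply HM. auto.
  - simpl in Hy', Hb'.
    apply (is_RInt_unique f a b) in Hy. apply (is_RInt_unique f a b) in Hy'.
    rewrite Hy' in Hy. subst y. exact Hb'.
Qed.

Lemma RInt_sub_interval (f : R -> R) a a0 b0 b :
  (forall a b, 0 < a -> a <= b -> ex_RInt f a b) ->
  (forall u, 0 < u -> 0 <= f u) ->
  0 < a -> a <= a0 -> a0 <= b0 -> b0 <= b ->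
  RInt f a0 b0 <= RInt f a b.
Proof.
  intros Hex Hpos Ha H1 H2 H3.
  assert (E1 : RInt f a b = RInt f a a0 + RInt f a0 b).
  { symmetry. apply (RInt_Chasles f a a0 b); apply Hex; lra. }
  assert (E2 : RInt f a0 b = RInt f a0 b0 + RInt f b0 b).
  { symmetry. apply (RInt_Chasles f a0 b0 b); apply Hex; lra. }
  assert (0 <= RInt f a a0).
  { apply RInt_ge_0; auto. intros; apply Hpos; lra. }
  assert (0 <= RInt f b0 b).
  { apply RInt_ge_0; auto. apply Hex; lra. intros; apply Hpos; lra. }
  lra.
Qed.

Lemma IRG_mono (f : R -> R) (M : R) :
  (forall a b, 0 < a -> a <= b -> ex_RInt f a b) ->
  (forall u, 0 < u -> 0 <= f u) ->
  (forall a b, 0 < a -> a <= b -> RInt f a b <= M) ->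
  ex_RInt_gen f (at_right 0) (Rbar_locally p_infty).
Proof.
  intros Hex Hpos HM.
  set (E := fun v => exists a b, 0 < a /\ a <= b /\ v = RInt f a b).
  assert (Hbd : bound E).
  { exists M. intros v [a [b [Ha [Hab ->]]]]. auto. }
  assert (He : exists v, E v).
  { exists (RInt f 1 1). exists 1, 1. repeat split; lra. }
  destruct (completeness E Hbd He) as [S [HS1 HS2]].
  exists S. apply IRG_intro; auto.
  intros eps Heps.
  assert (exists v, E v /\ S - eps < v) as [v [[a0 [b0 [Ha0 [Hab0 ->]]]] Hv]].
  { apply Classical_Prop.NNPP. intro Hn.
    assert (S <= S - eps). { apply HS2. intros v Hv. apply Rnot_lt_le. intro. apply Hn. eauto. }
    lra. }
  exists a0. split; auto. exists b0. intros a b Ha Hbb Hab.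
  assert (RInt f a0 b0 <= RInt f a b) by (apply RInt_sub_interval; auto; lra).
  assert (RInt f a b <= S) by (apply HS1; exists a, b; repeat split; lra).
  apply Rabs_def1; lra.
Qed.

Lemma IRG_lower (f : R -> R) (l lo : R) :
  (forall a b, 0 < a -> a <= b -> ex_RInt f a b) ->
  is_RInt_gen f (at_right 0) (Rbar_locally p_infty) l ->
  (exists d, 0 < d /\ exists M, forall a b, 0 < a < d -> M < b -> a <= b -> lo <= RInt f a b) ->
  lo <= l.
Proof.
  intros Hex Hl [d [Hd [M HM]]].
  apply Rnot_lt_le. intro Hlt.
  destruct (IRG_elim f l Hl (lo - l)) as [d' [Hd' [M' HM']]]. lra.
  set (a := Rmin d d' / 2). set (b := Rmax (Rmax M M') a + 1).
  assert (Ha : 0 < a < Rmin d d'). { unfold a. assert (0 < Rmin d d') by (apply Rmin_pos; lra). lra. }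
  assert (Hb1 : M < b /\ M' < b /\ a <= b).
  { unfold b. assert (Rmax M M' <= Rmax (Rmax M M') a) by apply Rmax_l.
    assert (a <= Rmax (Rmax M M') a) by apply Rmax_r.
    assert (M <= Rmax M M') by apply Rmax_l. assert (M' <= Rmax M M') by apply Rmax_r. lra. }
  assert (Rmin d d' <= d) by apply Rmin_l. assert (Rmin d d' <= d') by apply Rmin_r.
  assert (H1 := HM a b ltac:(lra) ltac:(lra) ltac:(lra)).
  assert (H2 := HM' a b ltac:(lra) ltac:(lra) (RInt f a b) ltac:(apply (RInt_correct f a b); apply Hex; lra)).
  apply Rabs_def2 in H2. lra.
Qed.

Lemma IRG_upper (f : R -> R) (l hi : R) :
  (forall a b, 0 < a -> a <= b -> ex_RInt f a b) ->
  is_RInt_gen f (at_right 0) (Rbar_locally p_infty) l ->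
  (exists d, 0 < d /\ exists M, forall a b, 0 < a < d -> M < b -> a <= b -> RInt f a b <= hi) ->
  l <= hi.
Proof.
  intros Hex Hl [d [Hd [M HM]]].
  apply Rnot_lt_le. intro Hlt.
  destruct (IRG_elim f l Hl (l - hi)) as [d' [Hd' [M' HM']]]. lra.
  set (a := Rmin d d' / 2). set (b := Rmax (Rmax M M') a + 1).
  assert (Ha : 0 < a < Rmin d d'). { unfold a. assert (0 < Rmin d d') by (apply Rmin_pos; lra). lra. }
  assert (Hb1 : M < b /\ M' < b /\ a <= b).
  { unfold b. assert (Rmax M M' <= Rmax (Rmax M M') a) by apply Rmax_l.
    assert (a <= Rmax (Rmax M M') a) by apply Rmax_r.
    assert (M <= Rmax M M') by apply Rmax_l. assert (M' <= Rmax M M') by apply Rmax_r. lra. }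
  assert (Rmin d d' <= d) by apply Rmin_l. assert (Rmin d d' <= d') by apply Rmin_r.
  assert (H1 := HM a b ltac:(lra) ltac:(lra) ltac:(lra)).
  assert (H2 := HM' a b ltac:(lra) ltac:(lra) (RInt f a b) ltac:(apply (RInt_correct f a b); apply Hex; lra)).
  apply Rabs_def2 in H2. lra.
Qed.

Definition fI (al : R) (n : nat) (y u : R) : R :=
  exp ((al - 1) * ln u) * u ^ n * exp (y * u - u ^ 2 / 2).

Definition Phi (al : R) (n : nat) (y : R) : R :=
  RInt_gen (fI al n y) (at_right 0) (Rbar_locally p_infty).

Lemma exp_le_inc x y : x <= y -> exp x <= exp y.
Proof. intros [H|H]. left; apply exp_increasing; auto. subst; lra. Qed.

Lemma ex_der_cont (f : R -> R) x : ex_derive f x -> continuous f x.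
Proof. intro H. apply (ex_derive_continuous (K := R_AbsRing) (V := R_NormedModule)); auto. Qed.

Lemma fI_pos al n y u : 0 < u -> 0 < fI al n y u.
Proof.
  intro Hu. unfold fI. apply Rmult_lt_0_compat. apply Rmult_lt_0_compat.
  apply exp_pos. apply pow_lt; auto. apply exp_pos.
Qed.

Lemma fI_der al n y u : 0 < u -> ex_derive (fI al n y) u.
Proof. intro Hu. unfold fI. auto_derive. auto. Qed.

Lemma fI_cont al n y u : 0 < u -> continuous (fI al n y) u.
Proof. intro Hu. apply ex_der_cont. apply fI_der; auto. Qed.

Lemma fI_ex al n y a b : 0 < a -> a <= b -> ex_RInt (fI al n y) a b.
Proof.
  intros Ha Hab. apply (ex_RInt_continuous (V := R_CompleteNormedModule)). intros z Hz.
  rewrite Rmin_left in Hz by auto. apply fI_cont. lra.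
Qed.

Lemma exp_pow_INR n u : exp (INR n * u) = exp u ^ n.
Proof.
  induction n. simpl. rewrite Rmult_0_l. apply exp_0.
  rewrite S_INR. simpl. rewrite <- IHn, <- exp_plus. f_equal. ring.
Qed.

Lemma le_exp_self u : u <= exp u.
Proof.
  destruct (Req_dec u 0). subst. rewrite exp_0. lra.
  assert (H1 := exp_ineq1 u H). lra.
Qed.

Lemma ln_le_self u : 0 < u -> ln u <= u.
Proof.
  intro Hu. rewrite <- (ln_exp u) at 2. apply ln_le; auto. apply le_exp_self.
Qed.

Definition Hdom (al u : R) : R := exp (al * (ln u - ln (1 + u))).
Definition gdom (al u : R) : R := al * Hdom al u / (u * (1 + u)).

Lemma Hdom_der al u : 0 < u -> is_derive (Hdom al) u (gdom al u).
Proof.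
  intro Hu. unfold gdom, Hdom. auto_derive. lra. unfold Rminus. field. lra.
Qed.

Lemma Hdom_bounds al u : 0 < al -> 0 < u -> 0 <= Hdom al u <= 1.
Proof.
  intros Hal Hu. unfold Hdom. split. left; apply exp_pos.
  apply Rle_trans with (exp 0); [| rewrite exp_0; lra]. apply exp_le_inc.
  assert (ln u <= ln (1 + u)) by (apply ln_le; lra). nra.
Qed.

Lemma gdom_cont al u : 0 < u -> continuous (gdom al) u.
Proof. intro Hu. apply ex_der_cont. unfold gdom, Hdom. auto_derive. repeat split; try lra. nra. Qed.

Lemma RInt_gdom al a b : 0 < al -> 0 < a -> a <= b -> RInt (gdom al) a b <= 1.
Proof.
  intros Hal Ha Hab.
  assert (H : is_RInt (gdom al) a b (minus (Hdom al b) (Hdom al a))).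
  { apply (is_RInt_derive (V := R_CompleteNormedModule)).
    - intros x Hx. rewrite Rmin_left, Rmax_right in Hx by auto. apply Hdom_der. lra.
    - intros x Hx. rewrite Rmin_left, Rmax_right in Hx by auto. apply gdom_cont. lra. }
  apply (is_RInt_unique (gdom al) a b) in H. rewrite H.
  assert (H1 := Hdom_bounds al a Hal Ha). assert (H2 := Hdom_bounds al b Hal ltac:(lra)).
  unfold minus, plus, opp; simpl. lra.
Qed.

Lemma fI_dom al n y u : 0 < al -> 0 < u ->
  fI al n y u <= exp ((y + al + 1 + INR n) ^ 2 / 2) / al * gdom al u.
Proof.
  intros Hal Hu. set (c := y + al + 1 + INR n).
  assert (Hun : u ^ n <= exp (INR n * u)).
  { rewrite exp_pow_INR. apply pow_incr. split. lra. apply le_exp_self. }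
  assert (HL1 : ln (1 + u) <= u).
  { rewrite <- (ln_exp u) at 2. apply ln_le. lra. left. apply exp_ineq1. lra. }
  assert (Hpos : 0 < u * (1 + u)) by nra.
  unfold gdom, Hdom, fI.
  assert (Hmain : exp ((al - 1) * ln u) * u ^ n * exp (y * u - u ^ 2 / 2) * (u * (1 + u))
     <= exp (c ^ 2 / 2) * exp (al * (ln u - ln (1 + u)))).
  { assert (Eu : u = exp (ln u)) by (rewrite exp_ln; auto).
    assert (Eu1 : 1 + u = exp (ln (1 + u))) by (rewrite exp_ln; lra).
    apply Rle_trans with (exp ((al - 1) * ln u) * exp (INR n * u) * exp (y * u - u ^ 2 / 2)
        * (exp (ln u) * exp (ln (1 + u)))).
    { rewrite <- Eu, <- Eu1. apply Rmult_le_compat_r. lra.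
      apply Rmult_le_compat_r. left; apply exp_pos.
      apply Rmult_le_compat_l. left; apply exp_pos. auto. }
    rewrite <- !exp_plus. apply exp_le_inc.
    assert (H0 : 0 <= (u - c) ^ 2) by apply pow2_ge_0.
    assert (H1 : (1 + al) * ln (1 + u) <= (1 + al) * u) by (apply Rmult_le_compat_l; lra).
    assert (E : (al - 1) * ln u + INR n * u + (y * u - u ^ 2 / 2) + (ln u + ln (1 + u))
       = c ^ 2 / 2 + al * (ln u - ln (1 + u)) + ((1 + al) * ln (1 + u) - (1 + al) * u) - (u - c) ^ 2 / 2)
      by (unfold c; field).
    rewrite E. lra. }
  apply Rmult_le_reg_r with (u * (1 + u)); auto.
  apply Rle_trans with (1 := Hmain). right. field. split; lra.
Qed.

Lemma Phi_ex al n y : 0 < al -> ex_RInt_gen (fI al n y) (at_right 0) (Rbar_locally p_infty).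
Proof.
  intro Hal.
  apply IRG_mono with (exp ((y + al + 1 + INR n) ^ 2 / 2) / al).
  - intros. apply fI_ex; auto.
  - intros. left. apply fI_pos; auto.
  - intros a b Ha Hab.
    set (K := exp ((y + al + 1 + INR n) ^ 2 / 2) / al).
    assert (HK : 0 < K) by (unfold K; apply Rdiv_lt_0_compat; auto; apply exp_pos).
    assert (Hg : ex_RInt (gdom al) a b).
    { apply (ex_RInt_continuous (V := R_CompleteNormedModule)). intros z Hz. rewrite Rmin_left in Hz by auto. apply gdom_cont. lra. }
    apply Rle_trans with (RInt (fun u => scal K (gdom al u)) a b).
    + apply RInt_le; [lra | exact (fI_ex al n y a b Ha Hab) | exact (ex_RInt_scal (gdom al) a b K Hg) | ].
      intros x Hx. change (scal K (gdom al x)) with (K * gdom al x). unfold K. apply fI_dom; auto. lra.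
    + apply Rle_trans with (scal K (RInt (gdom al) a b)).
      { right. apply (RInt_scal (V := R_CompleteNormedModule)). exact Hg. }
      change (scal K (RInt (gdom al) a b)) with (K * RInt (gdom al) a b).
      assert (H := RInt_gdom al a b Hal Ha Hab).
      rewrite <- (Rmult_1_r K) at 2. apply Rmult_le_compat_l; lra.
Qed.

Lemma Phi_is al n y : 0 < al ->
  is_RInt_gen (fI al n y) (at_right 0) (Rbar_locally p_infty) (Phi al n y).
Proof.
  intro Hal. apply (RInt_gen_correct (V := R_CompleteNormedModule)).
  apply Phi_ex; auto.
Qed.

Lemma Phi_lower al n y N : 0 < al -> 0 < N -> RInt (fI al n y) N (N + 1) <= Phi al n y.
Proof.
  intros Hal HN. apply IRG_lower with (fI al n y).
  - intros; apply fI_ex; auto.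
  - apply Phi_is; auto.
  - exists N. split; auto. exists (N + 1). intros a b Ha Hb Hab.
    apply RInt_sub_interval; try lra.
    + intros; apply fI_ex; auto.
    + intros; left; apply fI_pos; auto.
Qed.

Lemma Phi_pos al n y : 0 < al -> 0 < Phi al n y.
Proof.
  intro Hal. apply Rlt_le_trans with (RInt (fI al n y) 1 (1 + 1)).
  - apply RInt_gt_0. lra. intros; apply fI_pos; lra. intros; apply fI_cont; lra.
  - apply Phi_lower; lra.
Qed.

Lemma Phi_exp_lower al n N : 0 < al -> 0 < N ->
  exists c, 0 < c /\ forall y, 0 <= y -> c * exp (N * y) <= Phi al n y.
Proof.
  intros Hal HN. exists (RInt (fI al n 0) N (N + 1)). split.
  - apply RInt_gt_0. lra. intros; apply fI_pos; lra. intros; apply fI_cont; lra.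
  - intros y Hy. apply Rle_trans with (RInt (fI al n y) N (N + 1)); [| apply Phi_lower; auto].
    rewrite Rmult_comm. 
    assert (E : exp (N * y) * RInt (fI al n 0) N (N + 1) = RInt (fun u => scal (exp (N * y)) (fI al n 0 u)) N (N + 1)).
    { symmetry. apply (RInt_scal (V := R_CompleteNormedModule)). apply fI_ex; lra. }
    rewrite E. apply RInt_le; [lra | exact (ex_RInt_scal (fI al n 0) N (N + 1) (exp (N * y)) (fI_ex al n 0 N (N + 1) HN ltac:(lra))) | exact (fI_ex al n y N (N + 1) HN ltac:(lra)) | ].
    intros u Hu. unfold scal; simpl; unfold mult; simpl. unfold fI.
    rewrite Rmult_0_l.
    replace (y * u - u ^ 2 / 2) with ((0 - u ^ 2 / 2) + y * u) by ring.
    rewrite exp_plus.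
    assert (exp (N * y) <= exp (y * u)).
    { apply exp_le_inc. rewrite (Rmult_comm y u). apply Rmult_le_compat_r; lra. }
    set (A := exp ((al - 1) * ln u) * u ^ n * exp (0 - u ^ 2 / 2)).
    assert (0 < A).
    { apply Rmult_lt_0_compat. apply Rmult_lt_0_compat. apply exp_pos. apply pow_lt; lra. apply exp_pos. }
    apply Rle_trans with (exp (y * u) * A). apply Rmult_le_compat_r; lra.
    right. unfold A. ring.
Qed.

Lemma Phi_mono al n y y' : 0 < al -> y <= y' -> Phi al n y <= Phi al n y'.
Proof.
  intros Hal Hy.
  assert (H := RInt_gen_norm (V := R_CompleteNormedModule) (Fa := at_right 0) (Fb := Rbar_locally p_infty)
    (fI al n y) (fI al n y') (Phi al n y) (Phi al n y')).
  apply Rle_trans with (norm (Phi al n y)).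
  { unfold norm; simpl. unfold abs; simpl. apply Rle_abs. }
  apply H.
  - apply Filter_prod with (fun a => 0 < a < 1) (fun b => 1 < b).
    + exists (mkposreal 1 Rlt_0_1). intros u Hu Hu0. split; auto.
      assert (Hy1 : Rabs (u - 0) < 1) by exact Hu. rewrite Rminus_0_r in Hy1. apply Rabs_def2 in Hy1. lra.
    + exists 1. auto.
    + intros; simpl; lra.
  - apply Filter_prod with (fun a => 0 < a) (fun b => True).
    + exists (mkposreal 1 Rlt_0_1). intros; auto.
    + exists 0. auto.
    + intros a b Ha _ x Hx. simpl in Hx. unfold norm; simpl; unfold abs; simpl.
      assert (0 < x) by lra. rewrite Rabs_pos_eq by (left; apply fI_pos; auto).
      unfold fI. apply Rmult_le_compat_l.
      { left. apply Rmult_lt_0_compat. apply exp_pos. apply pow_lt; lra. }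
      apply exp_le_inc. assert (y * x <= y' * x) by (apply Rmult_le_compat_r; lra). lra.
  - apply Phi_is; auto.
  - apply Phi_is; auto.
Qed.

Lemma between_abs c t : Rmin 0 t <= c <= Rmax 0 t -> Rabs c <= Rabs t.
Proof.
  unfold Rmin, Rmax, Rabs. intros H.
  destruct (Rle_dec 0 t); destruct (Rcase_abs c); destruct (Rcase_abs t); lra.
Qed.

Lemma exp_taylor_bound t : Rabs (exp t - 1 - t) <= t ^ 2 * exp (Rabs t).
Proof.
  destruct (MVT_abs (fun s => exp s - s) (fun s => exp s - 1) 0 t) as [c [Hc1 Hc2]].
  { intros c _. apply is_derive_Reals. auto_derive; auto. ring. }
  destruct (MVT_abs exp exp 0 c) as [d [Hd1 Hd2]].
  { intros d _. apply derivable_pt_lim_exp. }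
  rewrite exp_0 in *. rewrite Rminus_0_r in *.
  replace (exp t - 1 - t) with (exp t - t - 1) by ring.
  rewrite Hc1. rewrite Hd1. rewrite Rminus_0_r.
  assert (Hct := between_abs c t Hc2).
  assert (Hdc := between_abs d c Hd2).
  rewrite (Rabs_pos_eq (exp d)) by (left; apply exp_pos).
  assert (exp d <= exp (Rabs t)).
  { apply exp_le_inc. assert (d <= Rabs d) by apply Rle_abs. lra. }
  assert (0 <= Rabs c) by apply Rabs_pos. assert (0 <= Rabs t) by apply Rabs_pos.
  rewrite <- (pow2_abs t).
  apply Rle_trans with (exp (Rabs t) * Rabs t * Rabs t).
  - apply Rmult_le_compat_r. auto. apply Rmult_le_compat; auto. left; apply exp_pos.
  - right. ring.
Qed.

Lemma IRG_ext_all (f g : R -> R) l :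
  (forall x, f x = g x) ->
  is_RInt_gen f (at_right 0) (Rbar_locally p_infty) l ->
  is_RInt_gen g (at_right 0) (Rbar_locally p_infty) l.
Proof.
  intros Hfg H. apply (is_RInt_gen_ext f g); auto.
  apply Filter_prod with (fun _ => True) (fun _ => True).
  - exists (mkposreal 1 Rlt_0_1). auto.
  - exists 0. auto.
  - intros; auto.
Qed.

Lemma fI_shift al n y h u : fI al n (y + h) u = fI al n y u * exp (h * u).
Proof.
  unfold fI. rewrite (Rmult_assoc (exp ((al - 1) * ln u) * u ^ n)), <- exp_plus. f_equal. f_equal. ring.
Qed.

Lemma fI_S al n y u : fI al (S n) y u = fI al n y u * u.
Proof. unfold fI. simpl. ring. Qed.

Lemma fI_SS1 al n y u : fI al (S (S n)) (y + 1) u = fI al n y u * u ^ 2 * exp u.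
Proof.
  rewrite fI_shift. rewrite Rmult_1_l. rewrite !fI_S. ring.
Qed.

Lemma Phi_rem al n y h : 0 < al -> Rabs h <= 1 ->
  Rabs (Phi al n (y + h) - Phi al n y - h * Phi al (S n) y) <= h ^ 2 * Phi al (S (S n)) (y + 1).
Proof.
  intros Hal Hh.
  assert (H1 : is_RInt_gen (fun u => fI al n (y + h) u - fI al n y u - h * fI al (S n) y u)
     (at_right 0) (Rbar_locally p_infty) (Phi al n (y + h) - Phi al n y - h * Phi al (S n) y)).
  { apply (is_RInt_gen_minus (V := R_NormedModule)).
    apply (is_RInt_gen_minus (V := R_NormedModule)); apply Phi_is; auto.
    apply (is_RInt_gen_scal (V := R_NormedModule)). apply Phi_is; auto. }
  assert (H2 : is_RInt_gen (fun u => h ^ 2 * fI al (S (S n)) (y + 1) u)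
     (at_right 0) (Rbar_locally p_infty) (h ^ 2 * Phi al (S (S n)) (y + 1))).
  { apply (is_RInt_gen_scal (V := R_NormedModule)). apply Phi_is; auto. }
  refine (RInt_gen_norm (V := R_CompleteNormedModule) (Fa := at_right 0) (Fb := Rbar_locally p_infty)
    _ _ _ _ _ _ H1 H2).
  - apply Filter_prod with (fun a => 0 < a < 1) (fun b => 1 < b).
    + exists (mkposreal 1 Rlt_0_1). intros u Hu Hu0. split; auto.
      assert (Hy1 : Rabs (u - 0) < 1) by exact Hu. rewrite Rminus_0_r in Hy1. apply Rabs_def2 in Hy1. lra.
    + exists 1. auto.
    + intros; simpl; lra.
  - apply Filter_prod with (fun a => 0 < a) (fun b => True).
    + exists (mkposreal 1 Rlt_0_1). intros; auto.
    + exists 0. auto.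
    + intros a b Ha _ x Hx. simpl in Hx. change (norm ?z) with (Rabs z).
      assert (Hx0 : 0 < x) by lra.
      rewrite fI_shift, fI_S, fI_SS1.
      replace (fI al n y x * exp (h * x) - fI al n y x - h * (fI al n y x * x))
        with (fI al n y x * (exp (h * x) - 1 - h * x)) by ring.
      rewrite Rabs_mult, (Rabs_pos_eq (fI al n y x)) by (left; apply fI_pos; auto).
      assert (Hf := fI_pos al n y x Hx0).
      apply Rle_trans with (fI al n y x * ((h * x) ^ 2 * exp (Rabs (h * x)))).
      { apply Rmult_le_compat_l. lra. apply exp_taylor_bound. }
      assert (exp (Rabs (h * x)) <= exp x).
      { apply exp_le_inc. rewrite Rabs_mult, (Rabs_pos_eq x) by lra.
        assert (Rabs h * x <= 1 * x) by (apply Rmult_le_compat_r; lra). lra. }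
      assert (0 <= (h * x) ^ 2) by apply pow2_ge_0.
      apply Rle_trans with (fI al n y x * ((h * x) ^ 2 * exp x)).
      { apply Rmult_le_compat_l. lra. apply Rmult_le_compat_l; auto. }
      right. ring.
Qed.

Lemma Phi_deriv al n y : 0 < al -> is_derive (Phi al n) y (Phi al (S n) y).
Proof.
  intro Hal. apply is_derive_Reals. intros eps Heps.
  set (C := Phi al (S (S n)) (y + 1)).
  assert (HC : 0 < C) by (apply Phi_pos; auto).
  assert (Hd : 0 < Rmin 1 (eps / C)) by (apply Rmin_pos; [lra | apply Rdiv_lt_0_compat; auto]).
  exists (mkposreal _ Hd). intros h Hh0 Hh. simpl in Hh.
  assert (Hh1 : Rabs h <= 1) by (assert (Rmin 1 (eps / C) <= 1) by apply Rmin_l; lra).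
  assert (Hh2 : Rabs h < eps / C) by (assert (Rmin 1 (eps / C) <= eps / C) by apply Rmin_r; lra).
  assert (HR := Phi_rem al n y h Hal Hh1). fold C in HR.
  replace ((Phi al n (y + h) - Phi al n y) / h - Phi al (S n) y)
    with ((Phi al n (y + h) - Phi al n y - h * Phi al (S n) y) / h) by (field; auto).
  unfold Rdiv. rewrite Rabs_mult, Rabs_inv.
  assert (Hah : 0 < Rabs h) by (apply Rabs_pos_lt; auto).
  apply Rmult_lt_reg_r with (Rabs h); auto.
  rewrite Rmult_assoc, Rinv_l by lra. rewrite Rmult_1_r.
  apply Rle_lt_trans with (h ^ 2 * C); auto.
  rewrite <- (pow2_abs h).
  assert (Rabs h * C < eps) by (apply (Rmult_lt_compat_r C) in Hh2; auto; unfold Rdiv in Hh2;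
     rewrite Rmult_assoc, Rinv_l in Hh2 by lra; lra).
  replace (Rabs h ^ 2 * C) with ((Rabs h * C) * Rabs h) by ring.
  apply Rmult_lt_compat_r; auto.
Qed.

Definition Bnd (al y u : R) : R := exp (al * ln u) * exp (y * u - u ^ 2 / 2).
Definition comb (al y u : R) : R := al * fI al 0 y u + y * fI al 1 y u - fI al 2 y u.

Lemma exp_al_ln al u : 0 < u -> exp (al * ln u) = exp ((al - 1) * ln u) * u.
Proof.
  intro Hu. rewrite <- (exp_ln u) at 3. rewrite <- exp_plus. f_equal. ring. auto.
Qed.

Lemma Bnd_der al y u : 0 < u -> is_derive (Bnd al y) u (comb al y u).
Proof.
  intro Hu. unfold Bnd, comb, fI. auto_derive. auto.
  rewrite (exp_al_ln al u Hu). simpl. unfold Rminus, Rdiv. field. lra.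
Qed.

Lemma comb_cont al y u : 0 < u -> continuous (comb al y) u.
Proof. intro Hu. apply ex_der_cont. unfold comb, fI. auto_derive. repeat split; auto. Qed.

Lemma Bnd_pos al y u : 0 < Bnd al y u.
Proof. unfold Bnd. apply Rmult_lt_0_compat; apply exp_pos. Qed.

Lemma sq_bound c u : c * u - u ^ 2 / 2 <= c ^ 2 / 2.
Proof. assert (0 <= (u - c) ^ 2) by apply pow2_ge_0. lra. Qed.

Lemma Bnd_lim0 al y : 0 < al -> filterlim (Bnd al y) (at_right 0) (locally 0).
Proof.
  intros Hal P [eps HP].
  set (e1 := eps * exp (- (y ^ 2 / 2))).
  assert (He1 : 0 < e1) by (unfold e1; apply Rmult_lt_0_compat; [apply cond_pos | apply exp_pos]).
  set (d := exp (ln e1 / al)).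
  assert (Hd : 0 < d) by apply exp_pos.
  exists (mkposreal d Hd). intros x Hx Hx0. apply HP. apply ballR.
  assert (Hy1 : Rabs (x - 0) < d) by exact Hx. rewrite Rminus_0_r in Hy1. apply Rabs_def2 in Hy1.
  rewrite Rminus_0_r. rewrite Rabs_pos_eq by (left; apply Bnd_pos).
  unfold Bnd.
  assert (H1 : exp (al * ln x) < e1).
  { rewrite <- (exp_ln e1) by auto. apply exp_increasing.
    assert (ln x < ln d) by (apply ln_increasing; lra).
    unfold d in H. rewrite ln_exp in H.
    apply (Rmult_lt_compat_l al) in H; auto. unfold Rdiv in H.
    rewrite <- Rmult_assoc, (Rmult_comm al (ln e1)), Rmult_assoc, Rinv_r in H by lra. lra. }
  assert (H2 : exp (y * x - x ^ 2 / 2) <= exp (y ^ 2 / 2)) by (apply exp_le_inc; apply sq_bound).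
  apply Rle_lt_trans with (exp (al * ln x) * exp (y ^ 2 / 2)).
  { apply Rmult_le_compat_l; auto. left; apply exp_pos. }
  apply Rlt_le_trans with (e1 * exp (y ^ 2 / 2)).
  { apply Rmult_lt_compat_r; auto. apply exp_pos. }
  unfold e1. rewrite Rmult_assoc, <- exp_plus. replace (- (y ^ 2 / 2) + y ^ 2 / 2) with 0 by ring.
  rewrite exp_0. simpl. lra.
Qed.

Lemma Bnd_liminf al y : 0 < al -> filterlim (Bnd al y) (Rbar_locally p_infty) (locally 0).
Proof.
  intros Hal P [eps HP].
  exists (Rmax 1 (Rmax (2 * (al + y + 1)) (- ln eps))).
  intros x Hx. apply HP. apply ballR.
  assert (H1 : 1 <= Rmax 1 (Rmax (2 * (al + y + 1)) (- ln eps))) by apply Rmax_l.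
  assert (H2 : Rmax (2 * (al + y + 1)) (- ln eps) <= Rmax 1 (Rmax (2 * (al + y + 1)) (- ln eps))) by apply Rmax_r.
  assert (H3 : 2 * (al + y + 1) <= Rmax (2 * (al + y + 1)) (- ln eps)) by apply Rmax_l.
  assert (H4 : - ln eps <= Rmax (2 * (al + y + 1)) (- ln eps)) by apply Rmax_r.
  rewrite Rminus_0_r. rewrite Rabs_pos_eq by (left; apply Bnd_pos).
  unfold Bnd. rewrite <- exp_plus.
  assert (Hx0 : 0 < x) by lra.
  assert (Hl : al * ln x <= al * x) by (apply Rmult_le_compat_l; [lra | apply ln_le_self; auto]).
  assert (Hq : 0 <= x * (x - 2 * (al + y + 1))) by (apply Rmult_le_pos; lra).
  apply Rle_lt_trans with (exp (- x)).
  { apply exp_le_inc. lra. }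
  rewrite <- (exp_ln eps) by apply cond_pos. apply exp_increasing. lra.
Qed.

Lemma Phi_ode al y : 0 < al -> Phi al 2 y = y * Phi al 1 y + al * Phi al 0 y.
Proof.
  intro Hal.
  assert (HD : is_RInt_gen (Derive (Bnd al y)) (at_right 0) (Rbar_locally p_infty) (0 - 0)).
  { apply is_RInt_gen_Derive.
    - apply Filter_prod with (fun a => 0 < a) (fun b => 0 < b).
      + exists (mkposreal 1 Rlt_0_1). intros; auto.
      + exists 0. auto.
      + intros a b Ha Hb x Hx. simpl in Hx.
        assert (0 < x) by (assert (0 < Rmin a b) by (apply Rmin_pos; auto); lra).
        eexists. apply Bnd_der; auto.
    - apply Filter_prod with (fun a => 0 < a) (fun b => 0 < b).
      + exists (mkposreal 1 Rlt_0_1). intros; auto.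
      + exists 0. auto.
      + intros a b Ha Hb x Hx. simpl in Hx.
        assert (Hx0 : 0 < x) by (assert (0 < Rmin a b) by (apply Rmin_pos; auto); lra).
        apply continuous_ext_loc with (comb al y).
        * exists (mkposreal x Hx0). intros t Ht.
          assert (Hy1 : Rabs (t - x) < x) by exact Ht. apply Rabs_def2 in Hy1.
          symmetry. apply is_derive_unique. apply Bnd_der. lra.
        * apply comb_cont; auto.
    - apply Bnd_lim0; auto.
    - apply Bnd_liminf; auto. }
  assert (HC : is_RInt_gen (comb al y) (at_right 0) (Rbar_locally p_infty) (0 - 0)).
  { apply (is_RInt_gen_ext (Derive (Bnd al y))); auto.
    apply Filter_prod with (fun a => 0 < a) (fun b => 0 < b).
    + exists (mkposreal 1 Rlt_0_1). intros; auto.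
    + exists 0. auto.
    + intros a b Ha Hb x Hx. simpl in Hx.
      assert (0 < x) by (assert (0 < Rmin a b) by (apply Rmin_pos; auto); lra).
      apply is_derive_unique. apply Bnd_der; auto. }
  assert (HL : is_RInt_gen (comb al y) (at_right 0) (Rbar_locally p_infty)
     (al * Phi al 0 y + y * Phi al 1 y - Phi al 2 y)).
  { apply (is_RInt_gen_minus (V := R_NormedModule)).
    apply (is_RInt_gen_plus (V := R_NormedModule)).
    apply (is_RInt_gen_scal (V := R_NormedModule)). apply Phi_is; auto.
    apply (is_RInt_gen_scal (V := R_NormedModule)). apply Phi_is; auto.
    apply Phi_is; auto. }
  apply (is_RInt_gen_unique (V := R_CompleteNormedModule)) in HC.
  apply (is_RInt_gen_unique (V := R_CompleteNormedModule)) in HL.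
  rewrite HC in HL. lra.
Qed.

Lemma der_mult (f g : R -> R) x df dg : is_derive f x df -> is_derive g x dg ->
  is_derive (fun t => f t * g t) x (df * g x + f x * dg).
Proof. intros Hf Hg. apply (is_derive_mult f g); auto. intros; apply Rmult_comm. Qed.

Lemma der_minus (f g : R -> R) x df dg : is_derive f x df -> is_derive g x dg ->
  is_derive (fun t => f t - g t) x (df - dg).
Proof. intros Hf Hg. apply (is_derive_minus f g); auto. Qed.

Lemma der_val (f : R -> R) (x d d' : R) : is_derive f x d -> @eq R d d' -> is_derive f x d'.
Proof. intros H E; subst; auto. Qed.

Lemma der_lin (f : R -> R) x a b df : is_derive f (a * x + b) df ->
  is_derive (fun t => f (a * t + b)) x (a * df).
Proof.
  intro H. apply (is_derive_comp f (fun t => a * t + b)); auto.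
  apply der_val with (a * 1 + 0). auto_derive. auto. rewrite Rplus_0_r; reflexivity. simpl. rewrite Rplus_0_r, Rmult_1_r. reflexivity.
Qed.


Definition GG al k th x := Phi al 0 (k * (th - x)).
Definition FF al k th x := Phi al 0 (k * (x - th)).
Definition dGG al k th x := - k * Phi al 1 (k * (th - x)).
Definition dFF al k th x := k * Phi al 1 (k * (x - th)).
Definition d2GG al k th x := k ^ 2 * Phi al 2 (k * (th - x)).
Definition d2FF al k th x := k ^ 2 * Phi al 2 (k * (x - th)).
Definition Wr al k th x := dFF al k th x * GG al k th x - FF al k th x * dGG al k th x.
Definition psiF al k th x := FF al k th x / GG al k th x.
Definition hh cs x := exp x - cs.
Definition NN al k th cs x := exp x * GG al k th x - hh cs x * dGG al k th x.
Definition KK al k th cs x := NN al k th cs x / Wr al k th x.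
Definition dNN al k th cs x := exp x * GG al k th x - hh cs x * d2GG al k th x.
Definition dWr al k th x := d2FF al k th x * GG al k th x - FF al k th x * d2GG al k th x.
Definition dKK al k th cs x :=
  (dNN al k th cs x * Wr al k th x - NN al k th cs x * dWr al k th x) / Wr al k th x ^ 2.
Definition QQ al k th cs x := exp x * (1 + k ^ 2 * (th - x)) - k ^ 2 * al * (exp x - cs).

Lemma Phi_comp_der al n k th x : 0 < al ->
  is_derive (fun t => Phi al n (k * (th - t))) x (- k * Phi al (S n) (k * (th - x))).
Proof.
  intro Hal.
  assert (H := der_lin (Phi al n) x (- k) (k * th) (Phi al (S n) (- k * x + k * th)) (Phi_deriv al n _ Hal)).
  eapply is_derive_ext; [| eapply der_val; [exact H |]].
  - intro t. simpl. f_equal. ring.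
  - simpl. f_equal. f_equal. ring.
Qed.

Lemma Phi_comp_der' al n k th x : 0 < al ->
  is_derive (fun t => Phi al n (k * (t - th))) x (k * Phi al (S n) (k * (x - th))).
Proof.
  intro Hal.
  assert (H := der_lin (Phi al n) x k (- k * th) (Phi al (S n) (k * x + - k * th)) (Phi_deriv al n _ Hal)).
  eapply is_derive_ext; [| eapply der_val; [exact H |]].
  - intro t. simpl. f_equal. ring.
  - simpl. f_equal. f_equal. ring.
Qed.

Lemma GG_der al k th x : 0 < al -> is_derive (GG al k th) x (dGG al k th x).
Proof. intro; apply Phi_comp_der; auto. Qed.
Lemma FF_der al k th x : 0 < al -> is_derive (FF al k th) x (dFF al k th x).
Proof. intro; apply Phi_comp_der'; auto. Qed.
Lemma dGG_der al k th x : 0 < al -> is_derive (dGG al k th) x (d2GG al k th x).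
Proof.
  intro Hal. unfold dGG, d2GG.
  apply der_val with (- k * (- k * Phi al 2 (k * (th - x)))).
  apply is_derive_scal. apply Phi_comp_der; auto. ring.
Qed.
Lemma dFF_der al k th x : 0 < al -> is_derive (dFF al k th) x (d2FF al k th x).
Proof.
  intro Hal. unfold dFF, d2FF.
  apply der_val with (k * (k * Phi al 2 (k * (x - th)))).
  apply is_derive_scal. apply Phi_comp_der'; auto. ring.
Qed.

Lemma GG_pos al k th x : 0 < al -> 0 < GG al k th x.
Proof. intro; apply Phi_pos; auto. Qed.
Lemma FF_pos al k th x : 0 < al -> 0 < FF al k th x.
Proof. intro; apply Phi_pos; auto. Qed.
Lemma dGG_neg al k th x : 0 < al -> 0 < k -> dGG al k th x < 0.
Proof. intros. unfold dGG. assert (0 < Phi al 1 (k * (th - x))) by (apply Phi_pos; auto). nra. Qed.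
Lemma dFF_pos al k th x : 0 < al -> 0 < k -> 0 < dFF al k th x.
Proof. intros. unfold dFF. apply Rmult_lt_0_compat; auto. apply Phi_pos; auto. Qed.

Lemma Wr_pos al k th x : 0 < al -> 0 < k -> 0 < Wr al k th x.
Proof.
  intros. unfold Wr.
  assert (H1 := GG_pos al k th x H). assert (H2 := FF_pos al k th x H).
  assert (H3 := dGG_neg al k th x H H0). assert (H4 := dFF_pos al k th x H H0).
  assert (0 < dFF al k th x * GG al k th x) by (apply Rmult_lt_0_compat; auto).
  assert (0 < FF al k th x * - dGG al k th x) by (apply Rmult_lt_0_compat; lra). lra.
Qed.

Lemma psiF_der al k th x : 0 < al -> is_derive (psiF al k th) x (Wr al k th x / GG al k th x ^ 2).
Proof.
  intro Hal. unfold psiF, Wr. apply is_derive_div. apply FF_der; auto. apply GG_der; auto.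
  apply Rgt_not_eq. apply GG_pos; auto.
Qed.

Lemma psiF_pos al k th x : 0 < al -> 0 < psiF al k th x.
Proof. intro. unfold psiF. apply Rdiv_lt_0_compat. apply FF_pos; auto. apply GG_pos; auto. Qed.

Lemma psiF_dpos al k th x : 0 < al -> 0 < k -> 0 < Wr al k th x / GG al k th x ^ 2.
Proof.
  intros. apply Rdiv_lt_0_compat. apply Wr_pos; auto. apply pow_lt. apply GG_pos; auto.
Qed.

Lemma NN_der al k th cs x : 0 < al -> is_derive (NN al k th cs) x (dNN al k th cs x).
Proof.
  intro Hal. unfold NN, dNN.
  eapply der_val. apply der_minus. apply der_mult. apply is_derive_exp. apply GG_der; auto.
  apply der_mult. unfold hh. apply der_minus. apply is_derive_exp. apply is_derive_const.
  apply dGG_der; auto.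
  unfold hh, dGG. simpl. unfold zero; simpl. ring.
Qed.

Lemma Wr_der al k th x : 0 < al -> is_derive (Wr al k th) x (dWr al k th x).
Proof.
  intro Hal. unfold Wr, dWr.
  eapply der_val. apply der_minus. apply der_mult. apply dFF_der; auto. apply GG_der; auto.
  apply der_mult. apply FF_der; auto. apply dGG_der; auto.
  ring.
Qed.

Lemma KK_der al k th cs x : 0 < al -> 0 < k -> is_derive (KK al k th cs) x (dKK al k th cs x).
Proof.
  intros Hal Hk. unfold KK, dKK. apply is_derive_div. apply NN_der; auto. apply Wr_der; auto.
  apply Rgt_not_eq. apply Wr_pos; auto.
Qed.

Lemma dKK_eq al k th cs x : 0 < al -> 0 < k ->
  dKK al k th cs x = GG al k th x * QQ al k th cs x / Wr al k th x.
Proof.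
  intros Hal Hk.
  assert (HW := Wr_pos al k th x Hal Hk).
  unfold dKK, dNN, dWr, NN, QQ, Wr, d2GG, d2FF, dGG, dFF, GG, FF, hh in *.
  rewrite !(Phi_ode al _ Hal).
  field. lra.
Qed.

Lemma der_contpt (f : R -> R) x d : is_derive f x d -> continuity_pt f x.
Proof.
  intro H. apply continuity_pt_filterlim. apply ex_der_cont. exists d; auto.
Qed.

Lemma incr_from_der (f df : R -> R) :
  (forall x, is_derive f x (df x)) -> (forall x, 0 < df x) ->
  forall x y, x < y -> f x < f y.
Proof.
  intros Hd Hp x y Hxy.
  destruct (MVT_gen f x y df) as [c [Hc E]].
  - intros; apply Hd.
  - intros; eapply der_contpt; apply Hd.
  - assert (0 < df c * (y - x)) by (apply Rmult_lt_0_compat; [apply Hp | lra]). lra.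
Qed.

Lemma psiF_incr al k th x y : 0 < al -> 0 < k -> x < y -> psiF al k th x < psiF al k th y.
Proof.
  intros Hal Hk. apply incr_from_der with (fun x => Wr al k th x / GG al k th x ^ 2).
  intros; apply psiF_der; auto. intros; apply psiF_dpos; auto.
Qed.

Lemma psiF_le_iff al k th x y : 0 < al -> 0 < k -> (psiF al k th x < psiF al k th y <-> x < y).
Proof.
  intros Hal Hk. split.
  - intro H. destruct (Rlt_or_le x y); auto.
    destruct (Req_dec x y). subst; lra.
    assert (psiF al k th y < psiF al k th x) by (apply psiF_incr; auto; lra). lra.
  - apply psiF_incr; auto.
Qed.

Lemma psiF_small al k th z : 0 < al -> 0 < k -> 0 < z -> exists x, psiF al k th x < z.
Proof.
  intros Hal Hk Hz.
  destruct (Phi_exp_lower al 0 1 Hal Rlt_0_1) as [c1 [Hc1 Hl]].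
  set (P0 := Phi al 0 0). assert (HP0 : 0 < P0) by (apply Phi_pos; auto).
  set (L := ln (P0 / (c1 * z))).
  set (x := th - (Rabs L + 1) / k).
  exists x.
  assert (Ekx : k * (th - x) = Rabs L + 1) by (unfold x; field; lra).
  assert (HFF : FF al k th x <= P0).
  { unfold FF, P0. apply Phi_mono; auto. replace (k * (x - th)) with (- (k * (th - x))) by ring.
    rewrite Ekx. assert (0 <= Rabs L) by apply Rabs_pos. lra. }
  assert (HGG : c1 * exp (k * (th - x)) <= GG al k th x).
  { unfold GG. rewrite <- (Rmult_1_l (k * (th - x))) at 1. apply Hl. rewrite Ekx.
    assert (0 <= Rabs L) by apply Rabs_pos. lra. }
  assert (Hexp : P0 / (c1 * z) < exp (k * (th - x))).
  { rewrite <- (exp_ln (P0 / (c1 * z))).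
    apply exp_increasing. rewrite Ekx. fold L. assert (L <= Rabs L) by apply Rle_abs. lra.
    apply Rdiv_lt_0_compat; auto. apply Rmult_lt_0_compat; auto. }
  assert (HG0 : 0 < GG al k th x) by (apply GG_pos; auto).
  unfold psiF. apply Rle_lt_trans with (P0 / GG al k th x).
  { unfold Rdiv. apply Rmult_le_compat_r. left; apply Rinv_0_lt_compat; auto. auto. }
  apply Rmult_lt_reg_r with (GG al k th x); auto. unfold Rdiv.
  rewrite Rmult_assoc, Rinv_l, Rmult_1_r by lra.
  assert (Hez : 0 < exp (k * (th - x))) by apply exp_pos.
  apply (Rmult_lt_compat_l (c1 * z)) in Hexp; [| apply Rmult_lt_0_compat; auto].
  unfold Rdiv in Hexp. rewrite <- Rmult_assoc, (Rmult_comm (c1 * z) P0), Rmult_assoc, Rinv_r, Rmult_1_r in Hexp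
    by (apply Rgt_not_eq; apply Rmult_lt_0_compat; auto).
  apply Rlt_le_trans with (c1 * z * exp (k * (th - x))); auto.
  replace (c1 * z * exp (k * (th - x))) with (z * (c1 * exp (k * (th - x)))) by ring.
  apply Rmult_le_compat_l; lra.
Qed.

Lemma psiF_large al k th z : 0 < al -> 0 < k -> 0 < z -> exists x, z < psiF al k th x.
Proof.
  intros Hal Hk Hz.
  destruct (Phi_exp_lower al 0 1 Hal Rlt_0_1) as [c1 [Hc1 Hl]].
  set (P0 := Phi al 0 0). assert (HP0 : 0 < P0) by (apply Phi_pos; auto).
  set (L := ln (P0 * z / c1)).
  set (x := th + (Rabs L + 1) / k).
  exists x.
  assert (Ekx : k * (x - th) = Rabs L + 1) by (unfold x; field; lra).
  assert (HGG : GG al k th x <= P0).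
  { unfold GG, P0. apply Phi_mono; auto. replace (k * (th - x)) with (- (k * (x - th))) by ring.
    rewrite Ekx. assert (0 <= Rabs L) by apply Rabs_pos. lra. }
  assert (HFF : c1 * exp (k * (x - th)) <= FF al k th x).
  { unfold FF. rewrite <- (Rmult_1_l (k * (x - th))) at 1. apply Hl. rewrite Ekx.
    assert (0 <= Rabs L) by apply Rabs_pos. lra. }
  assert (Hexp : P0 * z / c1 < exp (k * (x - th))).
  { rewrite <- (exp_ln (P0 * z / c1)).
    apply exp_increasing. rewrite Ekx. fold L. assert (L <= Rabs L) by apply Rle_abs. lra.
    apply Rdiv_lt_0_compat; auto. apply Rmult_lt_0_compat; auto. }
  assert (HG0 : 0 < GG al k th x) by (apply GG_pos; auto).
  unfold psiF. apply Rlt_le_trans with (c1 * exp (k * (x - th)) / P0).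
  { apply Rmult_lt_reg_r with P0; auto. unfold Rdiv.
    rewrite Rmult_assoc, Rinv_l, Rmult_1_r by lra.
    apply (Rmult_lt_compat_l c1) in Hexp; auto. unfold Rdiv in Hexp.
    rewrite <- Rmult_assoc, (Rmult_comm c1 (P0 * z)), Rmult_assoc, Rinv_r, Rmult_1_r in Hexp by lra.
    lra. }
  unfold Rdiv. apply Rle_trans with (FF al k th x * / P0).
  { apply Rmult_le_compat_r. left; apply Rinv_0_lt_compat; auto. auto. }
  apply Rmult_le_compat_l. left; apply FF_pos; auto.
  apply Rinv_le_contravar; auto.
Qed.

Lemma psiF_surj al k th z : 0 < al -> 0 < k -> 0 < z -> exists x, psiF al k th x = z.
Proof.
  intros Hal Hk Hz.
  destruct (psiF_small al k th z Hal Hk Hz) as [x1 H1].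
  destruct (psiF_large al k th z Hal Hk Hz) as [x2 H2].
  assert (Hx : x1 < x2) by (apply (psiF_le_iff al k th); auto; lra).
  destruct (IVT (fun x => psiF al k th x - z) x1 x2) as [x [_ Hx0]]; auto.
  - intro x. apply continuity_pt_minus. eapply der_contpt. apply psiF_der; auto.
    apply continuity_pt_const. intros a b; auto.
  - lra.
  - lra.
  - exists x. lra.
Qed.

Lemma X_lt al k th (X : R -> R) z x : 0 < al -> 0 < k ->
  (forall z, 0 < z -> psiF al k th (X z) = z) -> 0 < z ->
  (x < X z <-> psiF al k th x < z).
Proof.
  intros Hal Hk HX Hz. rewrite <- (HX z Hz) at 2. rewrite psiF_le_iff; auto. tauto.
Qed.

Lemma X_gt al k th (X : R -> R) z x : 0 < al -> 0 < k ->
  (forall z, 0 < z -> psiF al k th (X z) = z) -> 0 < z ->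
  (X z < x <-> z < psiF al k th x).
Proof.
  intros Hal Hk HX Hz. rewrite <- (HX z Hz) at 2. rewrite psiF_le_iff; auto. tauto.
Qed.

Lemma X_incr al k th (X : R -> R) z z' : 0 < al -> 0 < k ->
  (forall z, 0 < z -> psiF al k th (X z) = z) -> 0 < z -> z < z' -> X z < X z'.
Proof.
  intros Hal Hk HX Hz Hzz. apply (proj2 (X_lt al k th X z' (X z) Hal Hk HX ltac:(lra))). rewrite HX; auto.
Qed.

Lemma X_cont al k th (X : R -> R) z : 0 < al -> 0 < k ->
  (forall z, 0 < z -> psiF al k th (X z) = z) -> 0 < z -> continuity_pt X z.
Proof.
  intros Hal Hk HX Hz eps Heps.
  set (x0 := X z).
  set (a := psiF al k th (x0 - eps)). set (b := psiF al k th (x0 + eps)).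
  assert (Ha : a < z) by (unfold a; rewrite <- (HX z Hz); apply psiF_incr; auto; unfold x0; lra).
  assert (Hb : z < b) by (unfold b; rewrite <- (HX z Hz); apply psiF_incr; auto; unfold x0; lra).
  assert (Ha0 : 0 < a) by (apply psiF_pos; auto).
  exists (Rmin (z - a) (b - z)). split.
  { apply Rmin_pos; lra. }
  intros z' [_ Hz']. simpl in Hz'. unfold Rdist in Hz' |- *.
  assert (Rmin (z - a) (b - z) <= z - a) by apply Rmin_l.
  assert (Rmin (z - a) (b - z) <= b - z) by apply Rmin_r.
  apply Rabs_def2 in Hz'.
  assert (Hz'0 : 0 < z') by lra.
  assert (H1 : x0 - eps < X z') by (apply (proj2 (X_lt al k th X z' (x0 - eps) Hal Hk HX Hz'0)); unfold a in *; lra).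
  assert (H2 : X z' < x0 + eps) by (apply (proj2 (X_gt al k th X z' (x0 + eps) Hal Hk HX Hz'0)); unfold b in *; lra).
  apply Rabs_def1; unfold x0 in *; lra.
Qed.

Lemma X_der al k th (X : R -> R) z : 0 < al -> 0 < k ->
  (forall z, 0 < z -> psiF al k th (X z) = z) -> 0 < z ->
  is_derive X z (1 / (Wr al k th (X z) / GG al k th (X z) ^ 2)).
Proof.
  intros Hal Hk HX Hz.
  assert (Hlu : z / 2 < 2 * z) by lra.
  assert (Hin : z / 2 < z < 2 * z) by lra.
  assert (Hz1 : z / 2 < z) by lra. assert (Hz2 : z < 2 * z) by lra. assert (Hz3 : 0 < z / 2) by lra.
  assert (Hc : continuity_pt X z) by (apply (X_cont al k th X z Hal Hk HX Hz)).
  set (dpsi := fun x => Wr al k th x / GG al k th x ^ 2).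
  assert (Prf : forall a : R, X (z / 2) <= a <= X (2 * z) -> derivable_pt (psiF al k th) a).
  { intros a _. apply ex_derive_Reals_0. exists (dpsi a). apply psiF_der; auto. }
  assert (Hincr : X (z / 2) <= X z <= X (2 * z)).
  { split; left; apply (X_incr al k th X); auto. }
  assert (Hcomp : forall x0 : R, z / 2 <= x0 <= 2 * z -> comp (psiF al k th) X x0 = id x0).
  { intros x0 Hx0. unfold comp, id. apply HX. destruct Hx0. apply Rlt_le_trans with (z / 2); auto. }
  assert (Hval : derive_pt (psiF al k th) (X z) (Prf (X z) Hincr) = dpsi (X z)).
  { apply derive_pt_eq_0. apply is_derive_Reals. apply psiF_der; auto. }
  assert (Hne : derive_pt (psiF al k th) (X z) (Prf (X z) Hincr) <> 0).
  { intro E0. rewrite Hval in E0. assert (H0 := psiF_dpos al k th (X z) Hal Hk). unfold dpsi in E0. lra. }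
  assert (H := derivable_pt_lim_recip_interv (psiF al k th) X (z / 2) (2 * z) z Prf
    Hc Hlu Hin Hincr Hcomp Hne).
  rewrite Hval in H. apply is_derive_Reals. exact H.
Qed.

Lemma KK_pos al k th cs x : 0 < al -> 0 < k -> cs <= exp x -> 0 < KK al k th cs x.
Proof.
  intros Hal Hk Hx. unfold KK. apply Rdiv_lt_0_compat; [| apply Wr_pos; auto].
  unfold NN, hh. assert (H1 := GG_pos al k th x Hal). assert (H2 := dGG_neg al k th x Hal Hk).
  assert (0 < exp x * GG al k th x) by (apply Rmult_lt_0_compat; auto; apply exp_pos).
  assert (0 <= (exp x - cs) * - dGG al k th x) by (apply Rmult_le_pos; lra). lra.
Qed.

Lemma KK_small al k th cs : 0 < al -> 0 < k -> 0 < cs ->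
  forall eps, 0 < eps -> exists x0, forall x, x0 <= x -> KK al k th cs x < eps.
Proof.
  intros Hal Hk Hcs eps Heps.
  assert (HN : 0 < 2 / k) by (apply Rdiv_lt_0_compat; lra).
  destruct (Phi_exp_lower al 0 (2 / k) Hal HN) as [c0 [Hc0 Hl0]].
  destruct (Phi_exp_lower al 1 (2 / k) Hal HN) as [c1 [Hc1 Hl1]].
  set (cm := Rmin c0 (k * c1)).
  assert (Hcm : 0 < cm) by (apply Rmin_pos; auto; apply Rmult_lt_0_compat; auto).
  set (T := eps * cm * exp (- (2 * th))).
  assert (HT : 0 < T) by (unfold T; apply Rmult_lt_0_compat; [apply Rmult_lt_0_compat; auto | apply exp_pos]).
  exists (Rmax th (- ln T) + 1). intros x Hx.
  assert (Hx1 : th < x) by (assert (th <= Rmax th (- ln T)) by apply Rmax_l; lra).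
  assert (Hx2 : - ln T < x) by (assert (- ln T <= Rmax th (- ln T)) by apply Rmax_r; lra).
  set (m := cm * exp (2 * (x - th))).
  assert (Hm : 0 < m) by (unfold m; apply Rmult_lt_0_compat; auto; apply exp_pos).
  assert (E2 : 2 / k * (k * (x - th)) = 2 * (x - th)) by (field; lra).
  assert (HFF : m <= FF al k th x).
  { unfold FF. apply Rle_trans with (c0 * exp (2 / k * (k * (x - th)))).
    - rewrite E2. unfold m. apply Rmult_le_compat_r. left; apply exp_pos. apply Rmin_l.
    - apply Hl0. apply Rmult_le_pos; lra. }
  assert (HdFF : m <= dFF al k th x).
  { unfold dFF. apply Rle_trans with (k * (c1 * exp (2 / k * (k * (x - th))))).
    - rewrite E2. unfold m. rewrite <- Rmult_assoc. apply Rmult_le_compat_r. left; apply exp_pos. apply Rmin_r.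
    - apply Rmult_le_compat_l. lra. apply Hl1. apply Rmult_le_pos; lra. }
  assert (H1 := GG_pos al k th x Hal). assert (H2 := dGG_neg al k th x Hal Hk).
  assert (HW := Wr_pos al k th x Hal Hk).
  assert (HNN : NN al k th cs x <= exp x * (GG al k th x - dGG al k th x)).
  { unfold NN, hh. assert (0 <= cs * - dGG al k th x) by (apply Rmult_le_pos; lra). lra. }
  assert (HWr : m * (GG al k th x - dGG al k th x) <= Wr al k th x).
  { unfold Wr.
    assert (m * GG al k th x <= dFF al k th x * GG al k th x) by (apply Rmult_le_compat_r; lra).
    assert (m * - dGG al k th x <= FF al k th x * - dGG al k th x) by (apply Rmult_le_compat_r; lra).
    lra. }
  assert (HS : 0 < GG al k th x - dGG al k th x) by lra.
  assert (HK : KK al k th cs x <= exp x / m).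
  { unfold KK. apply Rmult_le_reg_r with (Wr al k th x); auto. unfold Rdiv.
    rewrite Rmult_assoc, Rinv_l, Rmult_1_r by lra.
    apply Rle_trans with (exp x * (GG al k th x - dGG al k th x)); auto.
    apply Rle_trans with (exp x * / m * (m * (GG al k th x - dGG al k th x))).
    - right. field. lra.
    - apply Rmult_le_compat_l; auto. left. apply Rmult_lt_0_compat. apply exp_pos. apply Rinv_0_lt_compat; auto. }
  apply Rle_lt_trans with (1 := HK).
  assert (Em : exp x / m = exp (- x) * / (cm * exp (- (2 * th)))).
  { unfold m. replace (2 * (x - th)) with (x + x + - (2 * th)) by ring.
    rewrite !exp_plus. assert (0 < exp x) by apply exp_pos. assert (0 < exp (- (2 * th))) by apply exp_pos.
    rewrite !exp_Ropp. assert (0 < exp (2 * th)) by apply exp_pos. field. repeat split; lra. }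
  rewrite Em.
  assert (Hc2 : 0 < cm * exp (- (2 * th))) by (apply Rmult_lt_0_compat; auto; apply exp_pos).
  apply Rmult_lt_reg_r with (cm * exp (- (2 * th))); auto.
  rewrite Rmult_assoc, Rinv_l, Rmult_1_r by lra.
  assert (exp (- x) < T) by (rewrite <- (exp_ln T) by auto; apply exp_increasing; lra).
  unfold T in H. lra.
Qed.

Lemma convex_from_der (Dm : R -> Prop) (f df : R -> R) :
  (forall x y z, Dm x -> Dm z -> x <= y <= z -> Dm y) ->
  (forall x, Dm x -> is_derive f x (df x)) ->
  (forall x y, Dm x -> Dm y -> x <= y -> df x <= df y) ->
  forall a b t, Dm a -> Dm b -> 0 <= t <= 1 ->
    f (t * a + (1 - t) * b) <= t * f a + (1 - t) * f b.
Proof.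
  intros Hbet Hd Hm a b t Ha Hb Ht.
  set (m := t * a + (1 - t) * b).
  assert (Hmab : Rmin a b <= m <= Rmax a b).
  { assert (E1 : m - a = (1 - t) * (b - a)) by (unfold m; ring).
    assert (E2 : b - m = t * (b - a)) by (unfold m; ring).
    unfold Rmin, Rmax. destruct (Rle_dec a b).
    - assert (0 <= (1 - t) * (b - a)) by (apply Rmult_le_pos; lra).
      assert (0 <= t * (b - a)) by (apply Rmult_le_pos; lra). lra.
    - assert (0 <= (1 - t) * (a - b)) by (apply Rmult_le_pos; lra).
      assert (0 <= t * (a - b)) by (apply Rmult_le_pos; lra). lra. }
  assert (HDm : Dm m).
  { unfold Rmin, Rmax in Hmab. destruct (Rle_dec a b).
    apply Hbet with a b; auto. apply Hbet with b a; auto; lra. }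
  assert (key : forall c, Dm c -> df m * (c - m) <= f c - f m).
  { intros c Hc.
    destruct (MVT_gen f m c df) as [d [Hd1 Hd2]].
    - intros x Hx. apply Hd. unfold Rmin, Rmax in Hx. destruct (Rle_dec m c).
      apply Hbet with m c; auto; lra. apply Hbet with c m; auto; lra.
    - intros x Hx. eapply der_contpt. apply Hd. unfold Rmin, Rmax in Hx. destruct (Rle_dec m c).
      apply Hbet with m c; auto; lra. apply Hbet with c m; auto; lra.
    - rewrite Hd2.
      assert (HDd : Dm d).
      { unfold Rmin, Rmax in Hd1. destruct (Rle_dec m c).
        apply Hbet with m c; auto; lra. apply Hbet with c m; auto; lra. }
      unfold Rmin, Rmax in Hd1. destruct (Rle_dec m c).
      + assert (df m <= df d) by (apply Hm; auto; lra).
        apply Rmult_le_compat_r; lra.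
      + assert (df d <= df m) by (apply Hm; auto; lra).
        assert (0 <= (df m - df d) * (m - c)) by (apply Rmult_le_pos; lra).
        assert (E3 : (df m - df d) * (m - c) = df d * (c - m) - df m * (c - m)) by ring. lra. }
  assert (Ka := key a Ha). assert (Kb := key b Hb).
  assert (E : t * (a - m) + (1 - t) * (b - m) = 0) by (unfold m; ring).
  assert (t * (df m * (a - m)) <= t * (f a - f m)) by (apply Rmult_le_compat_l; lra).
  assert ((1 - t) * (df m * (b - m)) <= (1 - t) * (f b - f m)) by (apply Rmult_le_compat_l; lra).
  assert (df m * (t * (a - m) + (1 - t) * (b - m)) = 0) by (rewrite E; ring).
  fold m.
  assert (E4 : t * (f a - f m) + (1 - t) * (f b - f m) = t * f a + (1 - t) * f b - f m) by ring.
  assert (E5 : t * (df m * (a - m)) + (1 - t) * (df m * (b - m)) = df m * (t * (a - m) + (1 - t) * (b - m))) by ring.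
  lra.
Qed.

Lemma der_mono (Dm : R -> Prop) (g dg : R -> R) :
  (forall x y z, Dm x -> Dm z -> x <= y <= z -> Dm y) ->
  (forall x, Dm x -> is_derive g x (dg x)) ->
  (forall x, Dm x -> 0 <= dg x) ->
  forall x y, Dm x -> Dm y -> x <= y -> g x <= g y.
Proof.
  intros Hbet Hd Hp x y Hx Hy Hxy.
  destruct (Req_dec x y). subst; lra.
  destruct (MVT_gen g x y dg) as [c [Hc E]].
  - intros z Hz. rewrite Rmin_left, Rmax_right in Hz by lra. apply Hd. apply Hbet with x y; auto; lra.
  - intros z Hz. rewrite Rmin_left, Rmax_right in Hz by lra. eapply der_contpt. apply Hd. apply Hbet with x y; auto; lra.
  - rewrite Rmin_left, Rmax_right in Hc by lra.
    assert (0 <= dg c) by (apply Hp; apply Hbet with x y; auto).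
    assert (0 <= dg c * (y - x)) by (apply Rmult_le_pos; lra). lra.
Qed.

Lemma G_eq mu sigma r theta x :
  G_ou mu sigma r theta x = GG (r / mu) (kappa mu sigma) theta x.
Proof.
  unfold G_ou, GG, Phi. f_equal. apply functional_extensionality. intro u.
  unfold fI, Rpower. simpl. ring.
Qed.

Lemma F_eq mu sigma r theta x :
  F_ou mu sigma r theta x = FF (r / mu) (kappa mu sigma) theta x.
Proof.
  unfold F_ou, FF, Phi. f_equal. apply functional_extensionality. intro u.
  unfold fI, Rpower. simpl. ring.
Qed.

Lemma psi_eq mu sigma r theta x :
  psi_ou mu sigma r theta x = psiF (r / mu) (kappa mu sigma) theta x.
Proof. unfold psi_ou, psiF. rewrite G_eq, F_eq. reflexivity. Qed.

Lemma f_s_decr mu sigma r theta cs x y : 0 < mu -> 0 < r -> 0 < cs -> x <= y ->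
  f_s mu sigma r theta cs y <= f_s mu sigma r theta cs x.
Proof.
  intros Hmu Hr Hcs Hxy. unfold f_s.
  assert (exp (- y) <= exp (- x)) by (apply exp_le_inc; lra).
  assert (0 < r * cs) by (apply Rmult_lt_0_compat; auto).
  assert (r * cs * exp (- y) <= r * cs * exp (- x)) by (apply Rmult_le_compat_l; lra).
  assert (mu * x <= mu * y) by (apply Rmult_le_compat_l; lra).
  lra.
Qed.

Lemma QQ_eq mu sigma r theta cs x : 0 < mu -> 0 < sigma ->
  QQ (r / mu) (kappa mu sigma) theta cs x =
  exp x * ((kappa mu sigma) ^ 2 / mu) * f_s mu sigma r theta cs x.
Proof.
  intros Hmu Hs.
  assert (Hk2 : kappa mu sigma ^ 2 = 2 * mu / sigma ^ 2).
  { unfold kappa. replace (sqrt (2 * mu / sigma ^ 2) ^ 2) with (sqrt (2 * mu / sigma ^ 2) * sqrt (2 * mu / sigma ^ 2)) by ring.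
    apply sqrt_sqrt.
    apply Rlt_le. apply Rdiv_lt_0_compat. lra. apply pow_lt; auto. }
  unfold QQ, f_s. rewrite Hk2. rewrite exp_Ropp.
  assert (0 < exp x) by apply exp_pos.
  field. repeat split; lra.
Qed.

Lemma main_gen (al k th cs xs : R) (H psi G X : R -> R) :
  0 < al -> 0 < k -> 0 < cs ->
  (forall x, psi x = psiF al k th x) ->
  (forall x, G x = GG al k th x) ->
  (forall z, 0 < z -> psiF al k th (X z) = z) ->
  (forall z, 0 < z -> H z = h_s cs (X z) / GG al k th (X z)) ->
  H 0 = real (Lim (fun x => Rmax (h_s cs x) 0 / G x) m_infty) ->
  (forall x, x <= xs -> 0 <= QQ al k th cs x) ->
  (forall x, xs <= x -> QQ al k th cs x <= 0) ->
  is_lim (fun x => Rmax (h_s cs x) 0 / G x) m_infty (H 0) /\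
  filterlim H (at_right 0) (locally (H 0)) /\
  (forall z, 0 < z -> continuous H z) /\
  (forall z, 0 < z -> ex_derive H z /\ ex_derive (Derive H) z) /\
  H 0 = 0 /\
  (forall z, 0 < z < psi (ln cs) -> H z < 0) /\
  (forall z, psi (ln cs) < z -> 0 < H z) /\
  (forall a b, psi (ln cs) < a -> a < b -> H a < H b) /\
  is_lim (Derive H) p_infty 0 /\
  convex_on (fun z => 0 < z <= psi xs) H /\
  concave_on (fun z => psi xs <= z) H.
Proof.
  intros Hal Hk Hcs Epsi EG HX EH H0def HQ1 HQ2.
  assert (Lim0 : is_lim (fun x => Rmax (h_s cs x) 0 / G x) m_infty 0).
  { apply is_lim_ext_loc with (fun _ => 0); [| apply is_lim_const].
    exists (ln cs). intros x Hx.
    assert (exp x < cs) by (rewrite <- (exp_ln cs) by auto; apply exp_increasing; auto).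
    unfold h_s. rewrite Rmax_right by lra. unfold Rdiv. ring. }
  assert (H0 : H 0 = 0).
  { rewrite H0def. rewrite (is_lim_unique _ _ _ Lim0). reflexivity. }
  set (dX := fun z => 1 / (Wr al k th (X z) / GG al k th (X z) ^ 2)).
  assert (HdX : forall z, 0 < z -> is_derive X z (dX z)).
  { intros z Hz. apply X_der; auto. }
  assert (HdH : forall z, 0 < z -> is_derive H z (KK al k th cs (X z))).
  { intros z Hz.
    apply is_derive_ext_loc with (fun t => h_s cs (X t) / GG al k th (X t)).
    - exists (mkposreal z Hz). intros t Ht.
      assert (Hy1 : Rabs (t - z) < z) by exact Ht. apply Rabs_def2 in Hy1.
      symmetry. apply EH. lra.
    - assert (Hq : is_derive (fun x => h_s cs x / GG al k th x) (X z)
         ((exp (X z) * GG al k th (X z) - h_s cs (X z) * dGG al k th (X z)) / GG al k th (X z) ^ 2)).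
      { apply is_derive_div.
        - unfold h_s. apply der_val with (exp (X z) - 0). apply der_minus. apply is_derive_exp.
          apply (is_derive_const (K := R_AbsRing) (V := R_NormedModule)). ring.
        - apply GG_der; auto.
        - apply Rgt_not_eq. apply GG_pos; auto. }
      eapply der_val. apply (is_derive_comp (fun x => h_s cs x / GG al k th x) X z _ _ Hq (HdX z Hz)).
      match goal with |- @eq R (scal ?a ?b) _ => change (scal a b) with (a * b) end.
      unfold dX, KK, NN, hh.
      assert (0 < GG al k th (X z)) by (apply GG_pos; auto).
      assert (0 < Wr al k th (X z)) by (apply Wr_pos; auto).
      unfold h_s. field. split; lra. }
  assert (HDH : forall z, 0 < z -> Derive H z = KK al k th cs (X z)).
  { intros z Hz. apply is_derive_unique. apply HdH; auto. }
  set (d2 := fun z => dX z * dKK al k th cs (X z)).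
  assert (Hd2 : forall z, 0 < z -> is_derive (Derive H) z (d2 z)).
  { intros z Hz.
    apply is_derive_ext_loc with (fun t => KK al k th cs (X t)).
    - exists (mkposreal z Hz). intros t Ht.
      assert (Hy1 : Rabs (t - z) < z) by exact Ht. apply Rabs_def2 in Hy1.
      symmetry. apply HDH. lra.
    - apply (is_derive_comp (KK al k th cs) X z).
      apply KK_der; auto. apply HdX; auto. }
  assert (HdXpos : forall z, 0 < z -> 0 < dX z).
  { intros z Hz. unfold dX. apply Rdiv_lt_0_compat. lra. apply psiF_dpos; auto. }
  assert (Hd2sign1 : forall z, 0 < z -> X z <= xs -> 0 <= d2 z).
  { intros z Hz Hxz. unfold d2. apply Rmult_le_pos. left; auto.
    rewrite dKK_eq by auto. apply Rmult_le_pos.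
    apply Rmult_le_pos. left; apply GG_pos; auto. apply HQ1; auto.
    left; apply Rinv_0_lt_compat; apply Wr_pos; auto. }
  assert (Hd2sign2 : forall z, 0 < z -> xs <= X z -> d2 z <= 0).
  { intros z Hz Hxz. unfold d2.
    assert (0 < dX z) by auto.
    rewrite dKK_eq by auto.
    assert (0 < GG al k th (X z)) by (apply GG_pos; auto).
    assert (0 < / Wr al k th (X z)) by (apply Rinv_0_lt_compat; apply Wr_pos; auto).
    assert (HQ := HQ2 (X z) Hxz).
    assert (0 <= GG al k th (X z) * - QQ al k th cs (X z) * / Wr al k th (X z)).
    { apply Rmult_le_pos. apply Rmult_le_pos; lra. lra. }
    assert (0 <= dX z * (GG al k th (X z) * - QQ al k th cs (X z) * / Wr al k th (X z))).
    { apply Rmult_le_pos; lra. }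
    unfold Rdiv. replace (dX z * (GG al k th (X z) * QQ al k th cs (X z) * / Wr al k th (X z)))
      with (- (dX z * (GG al k th (X z) * - QQ al k th cs (X z) * / Wr al k th (X z)))) by ring.
    lra. }
  assert (Hpsi : forall x, psi x = psiF al k th x) by auto.
  split; [rewrite H0; exact Lim0 |].
  split.
  {
    rewrite H0. intros P [eps HP].
    destruct (Phi_exp_lower al 0 1 Hal Rlt_0_1) as [c1 [Hc1 Hl]].
    set (L := ln ((cs + 1) / (c1 * eps))).
    set (x0 := Rmin 0 th - (Rabs L + 1) / k).
    assert (Hx0a : x0 <= 0 /\ x0 <= th).
    { unfold x0. assert (Rmin 0 th <= 0) by apply Rmin_l. assert (Rmin 0 th <= th) by apply Rmin_r.
      assert (0 < (Rabs L + 1) / k) by (apply Rdiv_lt_0_compat; auto; assert (0 <= Rabs L) by apply Rabs_pos; lra).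
      lra. }
    assert (Hd : 0 < psiF al k th x0) by (apply psiF_pos; auto).
    exists (mkposreal _ Hd). intros z Hz Hz0. apply HP. apply ballR. simpl in Hz.
    assert (Hy1 : Rabs (z - 0) < psiF al k th x0) by exact Hz. rewrite Rminus_0_r in Hy1. apply Rabs_def2 in Hy1.
    rewrite Rminus_0_r.
    set (x := X z).
    assert (Hx : x < x0) by (apply (proj2 (X_gt al k th X z x0 Hal Hk HX Hz0)); lra).
    rewrite EH by auto. fold x.
    assert (HG : c1 * exp (k * (th - x)) <= GG al k th x).
    { unfold GG. rewrite <- (Rmult_1_l (k * (th - x))) at 1. apply Hl. apply Rmult_le_pos; lra. }
    assert (Hkx : Rabs L + 1 <= k * (th - x)).
    { assert (Rmin 0 th <= th) by apply Rmin_r.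
      assert (E : k * (th - x0) = k * (th - Rmin 0 th) + (Rabs L + 1)) by (unfold x0; field; lra).
      assert (0 <= k * (th - Rmin 0 th)) by (apply Rmult_le_pos; lra).
      assert (k * (th - x0) <= k * (th - x)) by (apply Rmult_le_compat_l; lra). lra. }
    assert (HeL : (cs + 1) / (c1 * eps) < exp (k * (th - x))).
    { rewrite <- (exp_ln ((cs + 1) / (c1 * eps))).
      apply exp_increasing. fold L. assert (L <= Rabs L) by apply Rle_abs. lra.
      apply Rdiv_lt_0_compat. lra. apply Rmult_lt_0_compat; auto. apply cond_pos. }
    assert (Hepos : 0 < eps) by apply cond_pos.
    assert (HGpos : 0 < GG al k th x) by (apply GG_pos; auto).
    assert (Hh : Rabs (h_s cs x) <= cs + 1).
    { unfold h_s. assert (exp x <= 1) by (rewrite <- exp_0; apply exp_le_inc; lra).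
      assert (0 < exp x) by apply exp_pos. apply Rabs_le. lra. }
    unfold Rdiv. rewrite Rabs_mult, Rabs_inv, (Rabs_pos_eq (GG al k th x)) by lra.
    apply Rle_lt_trans with ((cs + 1) * / GG al k th x).
    { apply Rmult_le_compat_r; auto. left; apply Rinv_0_lt_compat; auto. }
    apply Rmult_lt_reg_r with (GG al k th x); auto.
    rewrite Rmult_assoc, Rinv_l, Rmult_1_r by lra.
    apply Rlt_le_trans with (eps * (c1 * exp (k * (th - x)))).
    2: { apply Rmult_le_compat_l; lra. }
    apply (Rmult_lt_compat_l (c1 * eps)) in HeL; [| apply Rmult_lt_0_compat; auto].
    unfold Rdiv in HeL. rewrite <- Rmult_assoc, (Rmult_comm (c1 * eps) (cs + 1)), Rmult_assoc, Rinv_r, Rmult_1_r in HeL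
      by (apply Rgt_not_eq; apply Rmult_lt_0_compat; auto).
    lra. }
  split.
  { intros z Hz. apply ex_der_cont. exists (KK al k th cs (X z)). apply HdH; auto. }
  split.
  { intros z Hz. split. exists (KK al k th cs (X z)). apply HdH; auto. exists (d2 z). apply Hd2; auto. }
  split; [exact H0 |].
  split.
  { intros z [Hz Hz1]. rewrite Hpsi in Hz1.
    assert (Hx : X z < ln cs) by (apply (proj2 (X_gt al k th X z (ln cs) Hal Hk HX Hz)); auto).
    rewrite EH by auto. unfold h_s.
    assert (exp (X z) < cs) by (rewrite <- (exp_ln cs) by auto; apply exp_increasing; auto).
    assert (0 < GG al k th (X z)) by (apply GG_pos; auto).
    unfold Rdiv. assert (0 < / GG al k th (X z)) by (apply Rinv_0_lt_compat; auto).
    assert (0 < (cs - exp (X z)) * / GG al k th (X z)) by (apply Rmult_lt_0_compat; lra).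
    replace ((exp (X z) - cs) * / GG al k th (X z)) with (- ((cs - exp (X z)) * / GG al k th (X z))) by ring.
    lra. }
  assert (Hpl : 0 < psi (ln cs)) by (rewrite Hpsi; apply psiF_pos; auto).
  assert (Hbig : forall z, psi (ln cs) < z -> ln cs < X z).
  { intros z Hz. assert (Hz0 : 0 < z) by lra. rewrite Hpsi in Hz. apply (proj2 (X_lt al k th X z (ln cs) Hal Hk HX Hz0)). auto. }
  split.
  { intros z Hz. assert (Hx := Hbig z Hz).
    rewrite EH by lra. unfold h_s.
    assert (cs < exp (X z)) by (rewrite <- (exp_ln cs) by auto; apply exp_increasing; auto).
    apply Rdiv_lt_0_compat. lra. apply GG_pos; auto. }
  split.
  { intros a b Ha Hab.
    destruct (MVT_gen H a b (Derive H)) as [c [Hc E]].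
    - intros x Hx. rewrite Rmin_left, Rmax_right in Hx by lra.
      rewrite HDH by lra. apply HdH. lra.
    - intros x Hx. rewrite Rmin_left, Rmax_right in Hx by lra.
      eapply der_contpt. apply HdH. lra.
    - rewrite Rmin_left, Rmax_right in Hc by lra.
      assert (Hc0 : 0 < c) by lra.
      assert (Hxc := Hbig c ltac:(lra)).
      rewrite HDH in E by auto.
      assert (0 < KK al k th cs (X c)).
      { apply KK_pos; auto. left. rewrite <- (exp_ln cs) by auto. apply exp_increasing; auto. }
      assert (0 < KK al k th cs (X c) * (b - a)) by (apply Rmult_lt_0_compat; lra). lra. }
  split.
  { intros P [eps HP].
    destruct (KK_small al k th cs Hal Hk Hcs eps (cond_pos eps)) as [x0 Hx0].
    set (x1 := Rmax x0 (ln cs)).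
    exists (psiF al k th x1). intros z Hz.
    assert (Hz0 : 0 < z) by (assert (0 < psiF al k th x1) by (apply psiF_pos; auto); lra).
    apply HP. apply ballR.
    assert (Hx1 : x1 < X z) by (apply (proj2 (X_lt al k th X z x1 Hal Hk HX Hz0)); auto).
    assert (x0 <= x1) by apply Rmax_l. assert (ln cs <= x1) by apply Rmax_r.
    rewrite HDH by auto. rewrite Rminus_0_r.
    assert (0 < KK al k th cs (X z)).
    { apply KK_pos; auto. left. rewrite <- (exp_ln cs) by auto. apply exp_increasing; lra. }
    rewrite Rabs_pos_eq by lra. apply Hx0. lra. }
  assert (Hpxs : 0 < psi xs) by (rewrite Hpsi; apply psiF_pos; auto).
  split.
  { unfold convex_on. intros a b t Ha Hb Ht.
    apply (convex_from_der (fun z => 0 < z <= psi xs) H (Derive H)); auto.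
    - intros x y z Hx Hz Hy; lra.
    - intros x Hx. rewrite HDH by lra. apply HdH; lra.
    - apply (der_mono (fun z => 0 < z <= psi xs) (Derive H) d2).
      + intros x y z Hx Hz Hy; lra.
      + intros x Hx. apply Hd2; lra.
      + intros x Hx. apply Hd2sign1. lra.
        destruct (Rle_or_lt (X x) xs); auto.
        assert (psi xs < x).
        { rewrite Hpsi. apply (proj1 (X_lt al k th X x xs Hal Hk HX ltac:(lra))); auto. }
        lra. }
  { unfold concave_on. intros a b t Ha Hb Ht.
    assert (Hc := convex_from_der (fun z => psi xs <= z) (fun z => - H z) (fun z => - Derive H z)).
    assert (- H (t * a + (1 - t) * b) <= t * - H a + (1 - t) * - H b).
    { apply Hc; auto.
      - intros x y z Hx Hz Hy; lra.
      - intros x Hx. apply (is_derive_opp (K := R_AbsRing) (V := R_NormedModule) H).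
        rewrite HDH by lra. apply HdH; lra.
      - intros x y Hx Hy Hxy.
        assert (Derive H y <= Derive H x).
        { assert (Hm := der_mono (fun z => psi xs <= z) (fun z => - Derive H z) (fun z => - d2 z)).
          assert (- Derive H x <= - Derive H y); [| lra].
          apply Hm; auto.
          + intros x' y' z' Hx' Hz' Hy'; lra.
          + intros w Hw. apply (is_derive_opp (K := R_AbsRing) (V := R_NormedModule) (Derive H)).
            apply Hd2; lra.
          + intros w Hw.
            assert (d2 w <= 0); [| lra].
            apply Hd2sign2. lra.
            destruct (Rle_or_lt xs (X w)); auto.
            assert (w < psi xs).
            { rewrite Hpsi. apply (proj1 (X_gt al k th X w xs Hal Hk HX ltac:(lra))); auto. }
            lra. }
        lra. }
    lra. }
Qed.

Theorem lemma4p2 (mu sigma r cs theta xs : R)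
  (Hmu : 0 < mu) (Hsigma : 0 < sigma) (Hr : 0 < r) (Hcs : 0 < cs)
  (Hxs : f_s mu sigma r theta cs xs = 0) :
  let H := H_ou mu sigma r theta cs in
  let psi := psi_ou mu sigma r theta in
  (* continuity on [0, +oo) *)
  is_lim (fun x => Rmax (h_s cs x) 0 / G_ou mu sigma r theta x) m_infty (H 0) /\
  filterlim H (at_right 0) (locally (H 0)) /\
  (forall z, 0 < z -> continuous H z) /\
  (* twice differentiable on (0, +oo) *)
  (forall z, 0 < z -> ex_derive H z /\ ex_derive (Derive H) z) /\
  (* (i) *)
  H 0 = 0 /\
  (forall z, 0 < z < psi (ln cs) -> H z < 0) /\
  (forall z, psi (ln cs) < z -> 0 < H z) /\
  (* (ii) *)
  (forall a b, psi (ln cs) < a -> a < b -> H a < H b) /\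
  is_lim (Derive H) p_infty 0 /\
  (* (iii) *)
  convex_on (fun z => 0 < z <= psi xs) H /\
  concave_on (fun z => psi xs <= z) H.
Proof.
  intros H psi.
  assert (Hal : 0 < r / mu) by (apply Rdiv_lt_0_compat; auto).
  assert (Hk : 0 < kappa mu sigma).
  { unfold kappa. apply sqrt_lt_R0. apply Rdiv_lt_0_compat. lra. apply pow_lt; auto. }
  assert (Hkm : 0 <= kappa mu sigma ^ 2 / mu).
  { apply Rlt_le. apply Rdiv_lt_0_compat; auto. apply pow_lt; auto. }
  apply (main_gen (r / mu) (kappa mu sigma) theta cs xs H psi (G_ou mu sigma r theta)
           (psi_inv mu sigma r theta)); auto.
  - intro x. unfold psi. apply psi_eq.
  - intro x. apply G_eq.
  - intros z Hz. rewrite <- psi_eq. unfold psi_inv.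
    apply (epsilon_spec (inhabits 0) (fun x => psi_ou mu sigma r theta x = z)).
    destruct (psiF_surj _ _ theta z Hal Hk Hz) as [x Hx]. exists x. rewrite psi_eq. auto.
  - intros z Hz. unfold H, H_ou. destruct (Rlt_dec 0 z); [| lra]. rewrite G_eq. reflexivity.
  - unfold H, H_ou. destruct (Rlt_dec 0 0); [lra | reflexivity].
  - intros x Hx. rewrite QQ_eq by auto. apply Rmult_le_pos. apply Rmult_le_pos; auto.
    left; apply exp_pos. rewrite <- Hxs. apply f_s_decr; auto.
  - intros x Hx. rewrite QQ_eq by auto.
    assert (f_s mu sigma r theta cs x <= 0) by (rewrite <- Hxs; apply f_s_decr; auto).
    assert (0 <= exp x * (kappa mu sigma ^ 2 / mu)) by (apply Rmult_le_pos; auto; left; apply exp_pos).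
    assert (0 <= exp x * (kappa mu sigma ^ 2 / mu) * - f_s mu sigma r theta cs x) by (apply Rmult_le_pos; lra).
    lra.
Qed.
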